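(* Let $n\ge2$ and $\Delta\subset B_n$ a proper ideal. Then there is a subcomplex $\Delta'$ of $\Delta$ such that $g_i(\mathrm{Bier}(B_n,\Delta))=f_i(\Delta')$ for $0\le i\le\lfloor\frac{n-1}2\rfloor$ and $f_i(\Delta')=0$ for $i>\lfloor\frac{n-1}2\rfloor$. In particular $(g_0,g_1,\dots,g_{\lfloor(n-1)/2\rfloor})$ of $\mathrm{Bier}(B_n,\Delta)$ is a $K$-sequence and $g_i(\mathrm{Bier}(B_n,\Delta))\ge0$ for all such $i$.
   Context: $B_n$ is the Boolean lattice of subsets of $[1,n]$. A proper ideal $\Delta\subset B_n$ is a nonempty family of subsets of $[1,n]$ closed under taking subsets with $[1,n]\notin\Delta$; $f_i(\Delta)$ is the number of sets of cardinality $i$ in $\Delta$; a subcomplex is a down-closed subfamily. The Bier sphere $\mathrm{Bier}(B_n,\Delta)$ is the simplicial complex whose faces are the pairs $(B,C)$ with $B\subsetneq C\subseteq[1,n]$, $B\in\Delta$, $C\notin\Delta$, with $(B',C')$ a face of $(B,C)$ iff $B'\subseteq B$ and $C\subseteq C'$; the face $(B,C)$ has $|B|+n-|C|$ vertices, and all facets have $n-1$ vertices. For such a complex $\Gamma$, $f_j(\Gamma)$ is the number of faces with $j$ vertices, $h_i(\Gamma):=\sum_{j=0}^{n-1}(-1)^{i+j}\binom{n-1-j}{n-1-i}f_j(\Gamma)$ ($0\le i\le n-1$; $h_i:=0$ otherwise), and $g_i(\Gamma):=h_i(\Gamma)-h_{i-1}(\Gamma)$ for $0\le i\le\lfloor\frac{n-1}2\rfloor$.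 A $K$-sequence is a sequence $(f_0,f_1,\dots)$ that is the $f$-vector (numbers of faces of each cardinality) of some finite simplicial complex. *)

(* Defs.v *)
From mathcomp Require Import all_boot all_order all_algebra.
Set Implicit Arguments. Unset Strict Implicit. Unset Printing Implicit Defensive.
Import GRing.Theory Num.Theory.

(* The ground set [1,n] is modelled by 'I_n; B_n = {set 'I_n}. *)

Definition down_closed (T : finType) (D : {set {set T}}) : Prop :=
  forall B C : {set T}, C \in D -> B \subset C -> B \in D.

Definition proper_ideal_Bn (n : nat) (D : {set {set 'I_n}}) : Prop :=
  [/\ D != set0, down_closed D & [set: 'I_n] \notin D].

Definition subcomplex (T : finType) (D' D : {set {set T}}) : Prop :=
  D' \subset D /\ down_closed D'.

Definition fnum (T : finType) (D : {set {set T}}) (i : nat) : nat :=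
  #|[set B in D | #|B| == i]|.

(* f_j(Bier(B_n, D)): faces (B,C), B proper subset of C, B in D, C notin D,
   with |B| + n - |C| = j vertices *)
Definition bier_f (n : nat) (D : {set {set 'I_n}}) (j : nat) : nat :=
  #|[set p : {set 'I_n} * {set 'I_n} |
      [&& p.1 \proper p.2, p.1 \in D, p.2 \notin D & #|p.1| + n - #|p.2| == j]]|.

Definition bier_h (n : nat) (D : {set {set 'I_n}}) (i : nat) : int :=
  if i <= n.-1 then
    (\sum_(j < n) (-1) ^+ (i + j) * ('C(n.-1 - j, n.-1 - i))%:Z * (bier_f D j)%:Z)%R
  else 0%R.

Definition bier_g (n : nat) (D : {set {set 'I_n}}) (i : nat) : int :=
  (bier_h D i - (if i is k.+1 then bier_h D k else 0))%R.

(* K-sequence: the f-vector (numbers of faces of each cardinality, starting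
   with cardinality 0; entries beyond the end of s are 0) of a finite
   simplicial complex, on some finite vertex set 'I_m. *)
Definition K_sequence (s : seq int) : Prop :=
  exists (m : nat) (K : {set {set 'I_m}}),
    down_closed K /\ forall i, ((fnum K i)%:Z = nth 0 s i)%R.

(* Main.v *)
Require Import Defs.
From mathcomp Require Import all_boot all_order all_algebra all_fingroup.
From mathcomp Require Import zify ring.
Set Implicit Arguments. Unset Strict Implicit. Unset Printing Implicit Defensive.
Import GRing.Theory Num.Theory.

Lemma card_le_n n (X : {set 'I_n}) : (#|X| <= n)%N.
Proof. by have := max_card X; rewrite card_ord. Qed.
Lemma cardC_I n (X : {set 'I_n}) : #|~: X| = (n - #|X|)%N.
Proof. by rewrite cardsCs setCK card_ord. Qed.

Lemma supsets_card n (S : {set 'I_n}) j k : #|S| = j -> (j <= k)%N -> (k <= n)%N ->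
  #|[set T : {set 'I_n} | S \subset T & #|T| == k]| = 'C(n - j, n - k).
Proof.
move=> <- hk hkn.
have -> : [set T : {set 'I_n} | S \subset T & #|T| == k] =
          (@setC 'I_n) @: [set E : {set 'I_n} | E \subset ~: S & #|E| == (n - k)%N].
  apply/setP=> T; rewrite !inE; apply/idP/imsetP.
    move=> /andP [sT /eqP cT]; exists (~: T); last by rewrite setCK.
    rewrite inE setCS sT cardC_I cT eqxx //.
  move=> [E]; rewrite inE => /andP [sE /eqP cE] eT; subst T.
  rewrite -setCS setCK sE /= cardC_I cE; apply/eqP.
  have := card_le_n E; set m := #|E| in cE *; lia.
rewrite card_imset; last exact: (@setC_inj 'I_n).
by rewrite cards_draws cardC_I.
Qed.

Lemma perm_id_case (T : finType) (X Y : {set T}) :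
  #|X| = #|Y| -> X \subset Y -> exists s : {perm T}, s @: X = Y.
Proof.
move=> hXY sub.
have eXY : X = Y by apply/eqP; rewrite eqEcard sub hXY leqnn.
exists 1%g; rewrite -eXY -[RHS]imset_id; apply: eq_imset => z; exact: perm1.
Qed.

Lemma perm_exists_k (T : finType) (k : nat) (X Y : {set T}) :
  #|X| = #|Y| -> #|X :\: Y| <= k -> exists s : {perm T}, s @: X = Y.
Proof.
elim: k X => [|k IH] X hXY hk.
  case: (boolP (X \subset Y)) => [sub|nsub]; first exact: perm_id_case.
  have [x xX xY] := subsetPn nsub.
  have xin : x \in X :\: Y by rewrite inE xY xX.
  by rewrite (cardsD1 x (X :\: Y)) xin in hk.
case: (boolP (X \subset Y)) => [sub|nsub]; first exact: perm_id_case.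
have [x xX xY] := subsetPn nsub.
have xin : x \in X :\: Y by rewrite inE xY xX.
have nsub' : ~~ (Y \subset X).
  apply/negP=> sYX.
  have eYX : Y = X by apply/eqP; rewrite eqEcard sYX hXY leqnn.
  by rewrite eYX xX in xY.
have [y yY yX] := subsetPn nsub'.
set X' := tperm x y @: X.
have cX' : #|X'| = #|Y| by rewrite card_imset ?hXY //; exact: perm_inj.
have sub' : X' :\: Y \subset (X :\: Y) :\ x.
  apply/subsetP=> z; rewrite !inE => /andP [zY zX']; case/imsetP: zX' => w wX ez; subst z.
  have [wx|wx] := eqVneq w x.
    by rewrite wx tpermL yY in zY.
  have [wy|wy] := eqVneq w y.
    by rewrite -wy wX in yX.
  rewrite tpermD 1?eq_sym // in zY *; rewrite zY wX andbT; apply/andP; split=> //; by rewrite eq_sym.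
have c1 : #|X' :\: Y| <= k.
  have := subset_leq_card sub'.
  rewrite (cardsD1 x (X :\: Y)) xin in hk.
  move: hk => /= hk h; rewrite add1n ltnS in hk; exact: leq_trans h hk.
have [s' hs'] := IH X' cX' c1.
exists (tperm x y * s')%g.
rewrite -hs' /X' -imset_comp; apply: eq_imset => z /=; by rewrite permM.
Qed.

Section Proc.
Variable n : nat.
Notation SS := {set {set 'I_n}}.


Lemma fnum0 i : fnum (set0 : SS) i = 0.
Proof. by apply/eqP; rewrite cards_eq0; apply/eqP/setP=> X; rewrite !inE. Qed.

Lemma proc (k : nat) (A B : SS) :
  #|B| <= k ->
  down_closed A ->
  (forall S : {set 'I_n}, S \in A -> 2 * #|S| < n) ->
  (forall T : {set 'I_n}, T \in B -> n < 2 * #|T|) ->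
  (forall T T' : {set 'I_n}, T \in B -> T' \subset T -> n < 2 * #|T'| -> T' \in B) ->
  (forall i, 2 * i < n -> fnum B (n - i) <= fnum A i) ->
  exists A' : SS, A' \subset A /\ down_closed A' /\
     forall i, 2 * i < n -> fnum A' i + fnum B (n - i) = fnum A i.
Proof.
elim: k A B => [|k IH] A B hk dA sA bB dB cnt.
  have B0 : B = set0 by apply/eqP; rewrite -cards_eq0 -leqn0.
  exists A; split=> //; split=> // i _; by rewrite B0 fnum0 addn0.
case: (set_0Vmem B) => [B0|[T TB]].
  exists A; split=> //; split=> // i _; by rewrite B0 fnum0 addn0.
pose i0 := n - #|T|.
have hT := bB T TB.
have hTn := card_le_n T.
have i0lt : 2 * i0 < n by rewrite /i0; lia.
have : 0 < fnum B (n - i0).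
  rewrite /fnum card_gt0; apply/set0Pn; exists T; rewrite inE TB /i0.
  by rewrite (subKn hTn) eqxx.
move=> /leq_trans /(_ (cnt _ i0lt)); rewrite /fnum card_gt0 => /set0Pn [S].
rewrite inE => /andP [SA /eqP cS].
have [s hs] : exists s : {perm 'I_n}, s @: (~: T) = S.
  apply: (@perm_exists_k _ n); first by rewrite cardC_I cS.
  exact: card_le_n.
pose psi (X : {set 'I_n}) := s @: (~: X).
have psi_card (X : {set 'I_n}) : #|psi X| = n - #|X|.
  by rewrite /psi card_imset ?cardC_I //; exact: perm_inj.
have psi_inj : injective psi.
  move=> X Y /imset_inj; move/(_ (@perm_inj _ s)); exact: setC_inj.
have psi_anti (X Y : {set 'I_n}) : X \subset Y -> psi Y \subset psi X.
  by move=> sXY; rewrite /psi imsetS // setCS.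
have psi_surj (S' : {set 'I_n}) : psi (~: (s^-1%g @: S')) = S'.
  rewrite /psi setCK -imset_comp -[RHS]imset_id; apply: eq_imset => z /=.
  by rewrite permKV.
pose U := [set psi X | X in B].
pose A1 := [set S' in A | S' \notin U].
pose B1 := [set X in B | psi X \notin A].
have B1B : B1 \subset B :\ T.
  apply/subsetP=> X; rewrite !inE => /andP [XB pXA]; rewrite XB andbT.
  by apply/eqP=> eXT; move: pXA; rewrite eXT /psi hs SA.
have hk1 : #|B1| <= k.
  have := subset_leq_card B1B; rewrite (cardsD1 T B) TB add1n ltnS in hk.
  move=> h; exact: leq_trans h hk.
have dA1 : down_closed A1.
  move=> S1 S2; rewrite !inE => /andP [S2A S2U] sub.
  rewrite (dA _ _ S2A sub) /=; apply/negP => /imsetP [X XB eS1].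
  move: S2U; rewrite /U; apply/negP/negPn.
  apply/imsetP; exists (~: (s^-1%g @: S2)); last by rewrite psi_surj.
  apply: (dB X) => //.
    rewrite -setCS setCK.
    have : psi X \subset S2 by rewrite -eS1.
    rewrite /psi => h; apply/subsetP => z zX.
    have : s z \in S2 by apply: (subsetP h); apply: imset_f.
    by move=> h2; apply/imsetP; exists (s z) => //; rewrite permK.
  rewrite cardC_I card_imset; last exact: perm_inj.
  have := sA _ S2A; have := card_le_n S2; lia.
have sA1 : forall S' : {set 'I_n}, S' \in A1 -> 2 * #|S'| < n.
  by move=> S'; rewrite inE => /andP [/sA].
have bB1 : forall X : {set 'I_n}, X \in B1 -> n < 2 * #|X|.
  by move=> X; rewrite inE => /andP [/bB].
have dB1 : forall X X' : {set 'I_n}, X \in B1 -> X' \subset X -> n < 2 * #|X'| -> X' \in B1.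
  move=> X X'; rewrite !inE => /andP [XB pXA] sub big.
  rewrite (dB _ _ XB sub big) /=; apply/negP => pX'A.
  by move: pXA; rewrite (dA _ _ pX'A (psi_anti _ _ sub)).
have split_cnt : forall i, 2 * i < n ->
   exists c, fnum A i = fnum A1 i + c /\ fnum B (n - i) = fnum B1 (n - i) + c.
  move=> i hi.
  pose C := [set X in B | (#|X| == n - i) && (psi X \in A)].
  exists #|C|; split.
  - rewrite /fnum -(cardsID U [set S' in A | #|S'| == i]) addnC; congr (_ + _).
      by apply: eq_card => z; rewrite !inE; case: (z \in A); case: (z \in U); case: (#|z| == i).
    have -> : [set S' in A | #|S'| == i] :&: U = psi @: C.
      apply/setP => z; rewrite !inE; apply/idP/idP.
        move=> /andP [/andP [zA /eqP zi] /imsetP [X XB ez]]; subst z.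
        rewrite mem_imset //= !inE XB zA andbT /=.
        apply/eqP; move: zi; rewrite psi_card => zi; have hX := card_le_n X.
        set m := #|X| in zi hX *; lia.
      move=> /imsetP [X]; rewrite inE => /andP [XB /andP [/eqP cX pXA]] ez; subst z.
      rewrite pXA psi_card cX /=; apply/andP; split; first by lia.
      by apply/imsetP; exists X.
    by rewrite card_imset.
  - rewrite /fnum -(cardsID [set X | psi X \in A] [set X in B | #|X| == n - i]).
    rewrite addnC; congr (_ + _);
      by apply: eq_card => z; rewrite !inE; case: (z \in B); case: (psi z \in A); case: (#|z| == n - i).
have cnt1 : forall i, 2 * i < n -> fnum B1 (n - i) <= fnum A1 i.
  move=> i hi; have [c [e1 e2]] := split_cnt i hi; have := cnt i hi.
  rewrite e1 e2; lia.
have [A2 [A2A1 [dA2 c2]]] := IH A1 B1 hk1 dA1 sA1 bB1 dB1 cnt1.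
exists A2; split.
  apply: subset_trans A2A1 _; apply/subsetP=> z; rewrite inE; by case/andP.
split=> // i hi.
have [c [e1 e2]] := split_cnt i hi; move: (c2 i hi) e1 e2; rewrite /fnum; lia.
Qed.

End Proc.

Lemma sum_bool_card (T : finType) (A : {set T}) (P : pred T) :
  \sum_(x in A) (P x : nat) = #|[set x in A | P x]|.
Proof.
rewrite -sum1dep_card [RHS]big_mkcond [LHS]big_mkcond /=.
by apply: eq_bigr => x _; case: (x \in A); case: (P x).
Qed.


Lemma fnum_mono n (D : {set {set 'I_n}}) i :
  down_closed D -> 2 * i < n -> fnum D (n - i) <= fnum D i.
Proof.
move=> dD hi.
set Ai := [set S in D | #|S| == i].
set Ak := [set T in D | #|T| == n - i].
have c0 : 0 < 'C(n - i, i) by rewrite bin_gt0; lia.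
have e1 : \sum_(T in Ak) \sum_(S in Ai) (S \subset T : nat) = #|Ak| * 'C(n - i, i).
  rewrite -sum_nat_const; apply: eq_bigr => T; rewrite inE => /andP [TD /eqP cT].
  rewrite sum_bool_card -cT -cards_draws; apply: eq_card => S.
  rewrite !inE; apply/idP/idP.
    by move=> /andP [/andP [_ ->] ->].
  by move=> /andP [sT ->]; rewrite (dD _ _ TD sT) sT.
have e2 : \sum_(S in Ai) \sum_(T in Ak) (S \subset T : nat) <= #|Ai| * 'C(n - i, i).
  rewrite -sum_nat_const; apply: leq_sum => S; rewrite inE => /andP [SD /eqP cS].
  rewrite sum_bool_card.
  have -> : 'C(n - i, i) = #|[set T : {set 'I_n} | S \subset T & #|T| == n - i]|.
    rewrite (supsets_card cS); try lia; congr 'C(_, _); lia.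
  apply: subset_leq_card; apply/subsetP=> T; rewrite !inE.
  by move=> /andP [/andP [_ ->] ->].
rewrite exchange_big /= e1 in e2.
by rewrite /fnum -/Ai -/Ak -(leq_pmul2r c0).
Qed.

Lemma trinom p r t : t <= r -> r <= p ->
  'C(p, t) * 'C(p - t, r - t) = 'C(p, r) * 'C(r, t).
Proof.
move=> htr hrp.
have X0 : 0 < t`! * (r - t)`! * (p - r)`! by rewrite !muln_gt0 !fact_gt0.
apply/eqP; rewrite -(eqn_pmul2r X0); apply/eqP.
have h1 := bin_fact (leq_trans htr hrp).
have h2 : 'C(p - t, r - t) * ((r - t)`! * (p - r)`!) = (p - t)`!.
  have e : p - r = (p - t) - (r - t) by lia.
  rewrite e; apply: bin_fact; lia.
have h3 := bin_fact hrp.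
have h4 := bin_fact htr.
transitivity (p`!).
  rewrite -h1 -h2; ring.
rewrite -h3 -h4; ring.
Qed.

Local Open Scope ring_scope.

Lemma core_binom (r : nat) :
  \sum_(t < r.+1) (-1) ^+ (r + t) * ('C(r, t))%:Z = ((r == 0%N) : nat)%:Z.
Proof.
transitivity ((-1 + 1 : int) ^+ r); last by rewrite addNr expr0n; case: (r == 0%N).
rewrite exprDn; apply: eq_bigr => t _; rewrite expr1n mulr1 -mulr_natr natz.
have ht : (t <= r)%N by rewrite -ltnS.
by rewrite -signr_odd oddD -oddB // signr_odd.
Qed.

Definition alpha (n k j : nat) : nat := if (k <= j)%N then 'C(n - k, j - k) else 0.

Lemma A3 (n k i : nat) : (k <= n)%N -> (i < n)%N ->
  \sum_(j < n) (-1) ^+ (i + j) * ('C(n - j, n - i))%:Z * (alpha n k j)%:Z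
  = ((k == i) : nat)%:Z.
Proof.
move=> hkn hin.
case: (ltnP i k) => hik.
  rewrite (_ : (k == i) = false); last by apply/negbTE; rewrite neq_ltn hik orbT.
  rewrite big1 // => j _; rewrite /alpha.
  case: (leqP k j) => hkj; last by rewrite mulr0.
  by rewrite bin_small ?mulr0 ?mul0r //; lia.
rewrite -(big_mkord xpredT (fun j => (-1) ^+ (i + j) * ('C(n - j, n - i))%:Z * (alpha n k j)%:Z)).
rewrite (@big_cat_nat _ _ _ k) //=.
rewrite big_nat_cond big1 ?add0r; last first.
  by move=> j /andP [/andP [_ hj] _]; rewrite /alpha leqNgt hj /= mulr0.
rewrite -{1}(add0n k) big_addn big_mkord.
set r := (i - k)%N; set p := (n - k)%N.
have hrp : (r < p)%N by rewrite /r /p; lia.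
transitivity (\sum_(t < p) ('C(p, r))%:Z * ((-1) ^+ (r + t) * ('C(r, t))%:Z)).
  apply: eq_bigr => t _.
  rewrite /alpha leq_addl addnK.
  case: (leqP t r) => htr.
    have e1 : (n - (t + k) = p - t)%N by rewrite /p; lia.
    have e2 : (n - i = (p - t) - (r - t))%N by move: htr; rewrite /p /r; lia.
    rewrite e1 e2 bin_sub; last by move: htr; rewrite /p /r; lia.
    have -> : (-1) ^+ (i + (t + k)) = (-1) ^+ (r + t) :> int.
      rewrite -signr_odd -[in RHS]signr_odd; congr (_ ^+ _).
      have -> : (i + (t + k) = (r + t) + k.*2)%N by rewrite /r -addnn; lia.
      by rewrite oddD odd_double addbF.
    rewrite -mulrA -PoszM mulnC trinom //; last by lia.
    by rewrite PoszM; ring.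
  rewrite (bin_small htr) (@bin_small (n - (t + k)) (n - i)) ?mulr0 ?mul0r //.
  rewrite /p /r in htr hrp *; lia.
rewrite -big_distrr /=.
have -> : \sum_(t < p) (-1) ^+ (r + t) * ('C(r, t))%:Z = \sum_(t < r.+1) (-1) ^+ (r + t) * ('C(r, t))%:Z.
  rewrite (big_ord_widen _ (fun t => (-1) ^+ (r + t) * ('C(r, t))%:Z) hrp) [RHS]big_mkcond /=.
  rewrite [LHS]big_mkcond /=; apply: eq_bigr => t _; case: ifP => // /negbT h.
  by rewrite bin_small ?mulr0 //; rewrite ltnNge -ltnS.
rewrite core_binom.
have -> : (r == 0%N) = (k == i).
  by rewrite /r; apply/idP/idP => /eqP h; apply/eqP; lia.
case: eqP => [eki|_]; last by rewrite mulr0.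
by rewrite /r eki subnn bin0 mulr1.
Qed.

Lemma g_formula n (D : {set {set 'I_n}}) i : (0 < n)%N -> (i <= n.-1)%N ->
  bier_g D i = \sum_(j < n) (-1) ^+ (i + j) * ('C(n - j, n - i))%:Z * (bier_f D j)%:Z.
Proof.
case: n D => // d D _.
case: i => [|i] hi.
  rewrite /bier_g /bier_h /= subr0; apply: eq_bigr => j _; congr (_ * _%:Z * _).
  case: j => [[|j] hj] /=; first by rewrite !subn0 !binn.
  by rewrite !bin_small //; lia.
rewrite /bier_g /bier_h hi (ltnW hi) -sumrB; apply: eq_bigr => j _ /=.
have hj := ltn_ord j.
have e : 'C(d.+1 - j, d.+1 - i.+1) = ('C(d - j, d - i.+1) + 'C(d - j, d - i))%N.
  have -> : (d.+1 - j = (d - j).+1)%N by lia.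
  have -> : (d.+1 - i.+1 = (d - i.+1).+1)%N by lia.
  by rewrite binS addnC; congr (_ + _)%N; congr 'C(_, _); lia.
rewrite e PoszD addSn exprS; ring.
Qed.



Lemma card_pair (T : finType) (R : T -> T -> bool) :
  #|[set p : T * T | R p.1 p.2]| = (\sum_x \sum_y (R x y : nat))%N.
Proof.
rewrite -sum1dep_card.
transitivity (\sum_x \sum_(y | R x y) 1)%N.
  by rewrite (pair_big_dep xpredT (fun x y => R x y) (fun _ _ => 1%N)).
apply: eq_bigr => x _; rewrite big_mkcond; apply: eq_bigr => y _; by case: (R x y).
Qed.

Lemma sum_ind_card (T : finType) (P : pred T) : (\sum_y (P y : nat))%N = #|[set y | P y]|.
Proof. by rewrite -sum1dep_card [RHS]big_mkcond; apply: eq_bigr => y _; case: (P y). Qed.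

Lemma count_up n (B : {set 'I_n}) j : (j < n)%N ->
  #|[set C : {set 'I_n} | B \subset C & (#|B| + n - #|C| == j)%N]| = alpha n #|B| j.
Proof.
move=> hj; rewrite /alpha; case: leqP => hBj.
  rewrite (_ : 'C(n - #|B|, j - #|B|) = 'C(n - #|B|, n - (n + #|B| - j))); last first.
    by congr 'C(_, _); have := card_le_n B; lia.
  rewrite -(@supsets_card n B #|B| (n + #|B| - j)) //; last by lia.
    apply: eq_card => C; rewrite !inE; case: (B \subset C) => //=.
    have := card_le_n C; set c := #|C|; set b := #|B| in hBj *.
    by move=> hc; apply/eqP/eqP; lia.
  by lia.
apply/eqP; rewrite cards_eq0; apply/eqP/setP => C; rewrite !inE.
apply/negbTE; apply/negP => /andP [sBC /eqP e].
have := subset_leq_card sBC; have := card_le_n C; set c := #|C|; set b := #|B| in hBj e *.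
lia.
Qed.

Lemma count_down n (C : {set 'I_n}) j : (j < n)%N ->
  #|[set B : {set 'I_n} | B \subset C & (#|B| + n - #|C| == j)%N]| = alpha n (n - #|C|) j.
Proof.
move=> hj; rewrite /alpha; case: leqP => hCj.
  have -> : (n - (n - #|C|) = #|C|)%N by have := card_le_n C; lia.
  rewrite -cards_draws; apply: eq_card => B; rewrite !inE; case: (B \subset C) => //=.
  have := card_le_n C; set c := #|C| in hCj *; set b := #|B|.
  by move=> hc; apply/eqP/eqP; lia.
apply/eqP; rewrite cards_eq0; apply/eqP/setP => B; rewrite !inE.
apply/negbTE; apply/negP => /andP [sBC /eqP e].
have := card_le_n C; set c := #|C| in hCj e *; set b := #|B| in e *.
lia.
Qed.

Lemma f_decomp n (D : {set {set 'I_n}}) j : down_closed D -> (j < n)%N ->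
  (bier_f D j + \sum_(C in D) alpha n (n - #|C|) j = \sum_(B in D) alpha n #|B| j)%N.
Proof.
move=> dD hj.
pose w (B C : {set 'I_n}) := (#|B| + n - #|C| == j)%N.
pose P := [set p : {set 'I_n} * {set 'I_n} | [&& p.1 \subset p.2, p.1 \in D & w p.1 p.2]].
have e1 : #|P| = (bier_f D j + #|[set p : {set 'I_n} * {set 'I_n} | [&& p.1 \subset p.2, p.2 \in D & w p.1 p.2]]|)%N.
  rewrite -(cardsID [set p : {set 'I_n} * {set 'I_n} | p.2 \in D] P) addnC; congr (_ + _)%N.
    apply: eq_card => p; rewrite !inE /w; case: p => B C /=.
    rewrite properEneq.
    case: (boolP (B \in D)) => hB; case: (boolP (C \in D)) => hC;
      case: (boolP (B \subset C)) => sBC /=; rewrite ?andbF ?andbT //=.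
    rewrite (_ : (B != C) = true) //; apply/negP => /eqP e; by move: hC; rewrite -e hB.
  apply: eq_card => p; rewrite !inE /w; case: p => B C /=.
  case hC: (C \in D); case sBC: (B \subset C) => //=; rewrite ?andbF //.
  by rewrite (dD _ _ hC sBC) andbT.
have e2 : #|P| = (\sum_(B in D) alpha n #|B| j)%N.
  rewrite /P (card_pair (fun B C : {set 'I_n} => [&& B \subset C, B \in D & w B C])) [RHS]big_mkcond /=; apply: eq_bigr => B _.
  rewrite sum_ind_card; case: (boolP (B \in D)) => BD.
    by rewrite -(count_up B hj); apply: eq_card => C; rewrite !inE.
  apply/eqP; rewrite cards_eq0; apply/eqP/setP => C; rewrite !inE; by case: (B \subset C).
have e3 : #|[set p : {set 'I_n} * {set 'I_n} | [&& p.1 \subset p.2, p.2 \in D & w p.1 p.2]]|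
        = (\sum_(C in D) alpha n (n - #|C|) j)%N.
  rewrite (card_pair (fun B C : {set 'I_n} => [&& B \subset C, C \in D & w B C])).
  rewrite exchange_big [RHS]big_mkcond /=; apply: eq_bigr => C _.
  case: (boolP (C \in D)) => CD.
    rewrite -(count_down C hj) -sum_ind_card; apply: eq_bigr => x _.
    by [].
  by apply: big1 => x _; rewrite andbF.
by rewrite -e3 -e2 e1.
Qed.

Lemma Posz_sum (I : finType) (P : pred I) (F : I -> nat) :
  ((\sum_(i | P i) F i)%N)%:Z = \sum_(i | P i) (F i)%:Z.
Proof. by rewrite -natz natr_sum; apply: eq_bigr => i _; rewrite natz. Qed.

Lemma sum_by_card n (D : {set {set 'I_n}}) (F : nat -> nat) :
  (\sum_(B in D) F #|B| = \sum_(k < n.+1) fnum D k * F k)%N.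
Proof.
transitivity (\sum_(B in D) \sum_(k < n.+1) (#|B| == k) * F k)%N.
  apply: eq_bigr => B _.
  have hB : (#|B| < n.+1)%N by rewrite ltnS card_le_n.
  rewrite (bigD1 (Ordinal hB)) //= eqxx mul1n big1 ?addn0 // => k /negbTE hk.
  rewrite (_ : (#|B| == k) = false) ?mul0n //.
  apply/negbTE/negP => /eqP e; move/negP: hk; apply; apply/eqP/val_inj => /=.
  by rewrite e.
rewrite exchange_big /=; apply: eq_bigr => k _.
rewrite /fnum -sum1_card big_distrl /= big_mkcond [RHS]big_mkcond /=.
apply: eq_bigr => B _; rewrite !inE.
by case: (B \in D); case: (#|B| == k); rewrite /= ?mul1n ?mul0n.
Qed.

Lemma f_int n (D : {set {set 'I_n}}) (j : nat) : down_closed D -> (j < n)%N ->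
  (bier_f D j)%:Z = \sum_(k < n.+1) (fnum D k)%:Z * ((alpha n k j)%:Z - (alpha n (n - k) j)%:Z).
Proof.
move=> dD hj.
have e := f_decomp dD hj.
rewrite (sum_by_card D (fun k => alpha n (n - k) j)) (sum_by_card D (fun k => alpha n k j)) in e.
have e' : (bier_f D j)%:Z = ((\sum_(k < n.+1) fnum D k * alpha n k j)%N)%:Z
                          - ((\sum_(k < n.+1) fnum D k * alpha n (n - k) j)%N)%:Z.
  by rewrite -e PoszD addrK.
rewrite e' !Posz_sum -sumrB; apply: eq_bigr => k _; rewrite !PoszM; ring.
Qed.

Lemma g_value n (D : {set {set 'I_n}}) i : (0 < n)%N -> down_closed D -> (i <= n.-1)%N ->
  bier_g D i = (fnum D i)%:Z - (fnum D (n - i))%:Z.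
Proof.
move=> n0 dD hi.
have hin : (i < n)%N by lia.
rewrite g_formula //.
transitivity (\sum_(k < n.+1) (fnum D k)%:Z *
   (\sum_(j < n) (-1) ^+ (i + j) * ('C(n - j, n - i))%:Z * (alpha n k j)%:Z
    - \sum_(j < n) (-1) ^+ (i + j) * ('C(n - j, n - i))%:Z * (alpha n (n - k) j)%:Z)).
  under eq_bigr => j _ do rewrite (f_int dD (ltn_ord j)) big_distrr /=.
  rewrite exchange_big /=; apply: eq_bigr => k _.
  rewrite -sumrB big_distrr /=; apply: eq_bigr => j _; ring.
under eq_bigr => k _ do rewrite (@A3 n k i (ltn_ord k) hin) (@A3 n (n - k) i (leq_subr k n) hin).
under eq_bigr => k _ do rewrite mulrBr.
rewrite sumrB; congr (_ - _).
  have hi1 : (i < n.+1)%N by lia.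
  rewrite (bigD1 (Ordinal hi1)) //= eqxx mulr1 big1 ?addr0 // => k hk.
  rewrite (_ : (k == i :> nat) = false) ?mulr0 //.
  apply/negbTE/negP => /eqP e; move/negP: hk; apply; apply/eqP/val_inj => /=.
  by rewrite e.
have hi1 : (n - i < n.+1)%N by lia.
rewrite (bigD1 (Ordinal hi1)) //= subKn ?(ltnW hin) // eqxx mulr1 big1 ?addr0 // => k hk.
rewrite (_ : (n - k == i)%N = false) ?mulr0 //.
apply/negbTE/negP => /eqP e; move/negP: hk; apply; apply/eqP/val_inj => /=.
have := ltn_ord k; lia.
Qed.


Local Close Scope ring_scope.

Lemma fnum_restrict n (D : {set {set 'I_n}}) (P : pred nat) i : P i ->
  fnum [set S in D | P #|S|] i = fnum D i.
Proof.
move=> Pi; rewrite /fnum; apply: eq_card => S; rewrite !inE.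
by case: (S \in D) => //=; case: (boolP (#|S| == i)) => [/eqP ->|]; rewrite ?Pi ?andbF ?andbT.
Qed.

Lemma fnum_small0 n (A : {set {set 'I_n}}) i :
  (forall S : {set 'I_n}, S \in A -> 2 * #|S| < n) -> n <= 2 * i -> fnum A i = 0.
Proof.
move=> sA hi; apply/eqP; rewrite cards_eq0; apply/eqP/setP => S; rewrite !inE.
apply/negbTE/negP => /andP [SA /eqP cS]; have := sA _ SA; rewrite cS; lia.
Qed.

Theorem corollary12 (n : nat) (D : {set {set 'I_n}}) :
  (2 <= n)%N -> proper_ideal_Bn D ->
  (exists D' : {set {set 'I_n}},
      subcomplex D' D /\
      (forall i : nat, (i <= n.-1 %/ 2)%N -> (bier_g D i = (fnum D' i)%:Z)%R) /\
      (forall i : nat, (n.-1 %/ 2 < i)%N -> fnum D' i = 0%N)) /\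
  K_sequence [seq bier_g D i | i <- iota 0 (n.-1 %/ 2).+1] /\
  (forall i : nat, (i <= n.-1 %/ 2)%N -> (0 <= bier_g D i)%R).
Proof.
move=> hn [_ dD _].
have keq : forall i, (i <= n.-1 %/ 2) = (2 * i < n).
  move=> i; apply/idP/idP => h; lia.
pose A := [set S in D | 2 * #|S| < n].
pose B := [set T in D | n < 2 * #|T|].
have dA : down_closed A.
  move=> S1 S2; rewrite !inE => /andP [S2D h2] sub.
  rewrite (dD _ _ S2D sub) /=; apply: leq_ltn_trans h2; by rewrite leq_mul2l subset_leq_card ?orbT.
have sA : forall S : {set 'I_n}, S \in A -> 2 * #|S| < n.
  by move=> S; rewrite inE => /andP [].
have bB : forall T : {set 'I_n}, T \in B -> n < 2 * #|T|.
  by move=> T; rewrite inE => /andP [].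
have dB : forall T T' : {set 'I_n}, T \in B -> T' \subset T -> n < 2 * #|T'| -> T' \in B.
  move=> T T'; rewrite !inE => /andP [TD _] sub big; by rewrite (dD _ _ TD sub) big.
have eA : forall i, 2 * i < n -> fnum A i = fnum D i.
  move=> i hi; exact: (@fnum_restrict n D (fun m => 2 * m < n)).
have eB : forall i, 2 * i < n -> fnum B (n - i) = fnum D (n - i).
  move=> i hi; apply: (@fnum_restrict n D (fun m => n < 2 * m)); rewrite /=; lia.
have cnt : forall i, 2 * i < n -> fnum B (n - i) <= fnum A i.
  by move=> i hi; rewrite eA // eB //; apply: fnum_mono.
have [A' [A'A [dA' cA']]] := proc (leqnn #|B|) dA sA bB dB cnt.
have sA' : forall S : {set 'I_n}, S \in A' -> 2 * #|S| < n.
  by move=> S SA'; apply: sA; apply: (subsetP A'A).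
have gval : forall i, i <= n.-1 %/ 2 -> (bier_g D i = (fnum A' i)%:Z)%R.
  move=> i; rewrite keq => hi.
  have n0 : 0 < n by lia.
  have hi' : i <= n.-1 by lia.
  rewrite g_value //.
  have e := cA' i hi; rewrite eA // eB // in e.
  by rewrite -e PoszD addrK.
have zero : forall i, n.-1 %/ 2 < i -> fnum A' i = 0.
  move=> i; rewrite ltnNge keq -leqNgt => hi; exact: fnum_small0.
split.
  exists A'; split; last by split.
  split=> //; apply: subset_trans A'A _; apply/subsetP => S; rewrite inE; by case/andP.
split.
  exists n, A'; split=> // i.
  case: (leqP i (n.-1 %/ 2)) => hi.
    rewrite (nth_map 0%N); last by rewrite size_iota ltnS.
    by rewrite nth_iota ?add0n ?gval // ltnS.
  rewrite nth_default; last by rewrite size_map size_iota.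
  by rewrite zero.
by move=> i hi; rewrite gval.
Qed.
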